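(* Let $N\ge 1$ and let $M=\prod_{i=1}^{N}M_i\subset\mathbb{R}^N$ be compact, with each $M_i\subset\mathbb{R}$. Let $U=\prod_{i=1}^{N}U_i\subset\mathbb{C}^N$, where each $U_i$ is an open domain of $\mathbb{C}$ symmetric about the real axis with $M_i\subset U_i$, and let $\partial\bar U:=\prod_{i=1}^N\partial \bar U_i$. Then the Cauchy kernel functions are dense in $\mathcal{F}_M$: every continuous function $f:M\to\mathbb{R}$ is a uniform limit on $M$ of finite linear combinations $\sum_{k=1}^m\theta_k K(\boldsymbol{\xi}_k,\cdot)$ with $m\ge1$, $\theta_k\in\mathbb{C}$ and $\boldsymbol{\xi}_k\in\partial\bar U$.
   Context: $\mathcal{F}_M$ denotes the space of continuous functions $M\to\mathbb{R}$. For $\boldsymbol{\xi}=(\xi^1,\dots,\xi^N)\in\partial\bar U$ and $\mathbf{x}=(x_1,\dots,x_N)\in M$, the Cauchy kernel is $K(\boldsymbol{\xi},\mathbf{x}):=\prod_{i=1}^{N}\frac{1}{\xi^i-x_i}$. *)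

(* Defs.v *)
From HB Require Import structures.
From mathcomp Require Import all_boot all_order all_algebra.
From mathcomp Require Import all_classical all_reals all_analysis.
From mathcomp Require Import complex.
Set Implicit Arguments. Unset Strict Implicit. Unset Printing Implicit Defensive.
Import Order.TTheory GRing.Theory Num.Theory.
Import numFieldTopology.Exports numFieldNormedType.Exports.
Local Open Scope classical_set_scope.
Local Open Scope ring_scope.

(* The complex numbers R[i] over a real closed field R, seen as a
   numClosedFieldType, so that they carry the standard metric topology
   induced by the modulus. *)
Definition Cx (R : rcfType) : numClosedFieldType := R[i].

Definition RtoC (R : rcfType) (x : R) : Cx R := real_complex R x.

Definition conjC (R : rcfType) (z : Cx R) : Cx R := conjc (z : R[i]).

Definition boundary (T : topologicalType) (A : set T) : set T :=
  closure A `\` interior A.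

(* Points of R^N are row vectors 'rV[R]_N; x_i is x ord0 i.
   The Cauchy kernel K(xi, x) = prod_{i=1}^N 1/(xi^i - x_i). *)
Definition cauchy_kernel (R : rcfType) (N : nat) (xi : 'I_N -> Cx R)
    (x : 'rV[R]_N) : Cx R :=
  \prod_(i < N) (xi i - RtoC (x ord0 i))^-1.

(* Main.v *)
Require Import Defs.
From HB Require Import structures.
From mathcomp Require Import all_boot all_order all_algebra.
From mathcomp Require Import all_classical all_reals all_analysis.
From mathcomp Require Import complex.
From mathcomp.algebra_tactics Require Import ring lra.
Import Order.TTheory GRing.Theory Num.Theory.
Import numFieldTopology.Exports numFieldNormedType.Exports.
Local Open Scope classical_set_scope.
Local Open Scope ring_scope.
Set Implicit Arguments. Unset Strict Implicit. Unset Printing Implicit Defensive.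

Section A.
Variable R : realType.
Local Notation C := (Cx R).

Definition nc (z : C) : R := Normc.normc (z : R[i]).

Lemma normE (z : C) : `|z| = RtoC (nc z).
Proof. by case: z. Qed.

Lemma ltC (a b : R) : (RtoC a < RtoC b :> C) = (a < b).
Proof. exact: ltcR. Qed.

Lemma leC (a b : R) : (RtoC a <= RtoC b :> C) = (a <= b).
Proof. exact: lecR. Qed.

Lemma RtoC_inj : injective (@RtoC R).
Proof. by move=> a b []. Qed.

Lemma nc_ge0 z : 0 <= nc z.
Proof. by rewrite -leC -normE; exact: normr_ge0. Qed.

Lemma nc0 : nc 0 = 0.
Proof. by apply: RtoC_inj; rewrite -normE normr0. Qed.

Lemma nc_eq0 z : (nc z == 0) = (z == 0).
Proof.
apply/eqP/eqP => [h|->]; last exact: nc0.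
by apply/eqP; rewrite -normr_eq0 normE h.
Qed.

Lemma ncD a b : nc (a + b) <= nc a + nc b.
Proof. exact: le_normcD. Qed.

Lemma ncN a : nc (- a) = nc a.
Proof. exact: normcN. Qed.

Lemma ncB a b : nc (a - b) = nc (b - a).
Proof. by rewrite -ncN opprB. Qed.

Lemma ncM a b : nc (a * b) = nc a * nc b.
Proof. exact: Normc.normcM. Qed.

Lemma ncV a : nc (a^-1) = (nc a)^-1.
Proof. exact: Normc.normcV. Qed.

Lemma nc_RtoC (a : R) : nc (RtoC a) = `|a|.
Proof. by rewrite /nc /RtoC /= expr0n /= addr0 sqrtr_sqr. Qed.

Lemma nc_Re (z : C) : `|(complex.Re (z : R[i]) : R)| <= nc z.
Proof.
case: z => a b; rewrite /nc /= -sqrtr_sqr; apply: ler_wsqrtr.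
by rewrite lerDl sqr_ge0.
Qed.

Lemma nc_Im (z : C) : `|(complex.Im (z : R[i]) : R)| <= nc z.
Proof.
case: z => a b; rewrite /nc /= -sqrtr_sqr; apply: ler_wsqrtr.
by rewrite lerDr sqr_ge0.
Qed.

Lemma nc_conj (z : C) : nc (conjC z) = nc z.
Proof. by case: z => a b; rewrite /nc /conjC /= sqrrN. Qed.

Lemma conjCB (a b : C) : conjC (a - b) = conjC a - conjC b.
Proof. by rewrite /conjC rmorphB. Qed.

Lemma conjCM (a b : C) : conjC (a * b) = conjC a * conjC b.
Proof. by rewrite /conjC rmorphM. Qed.

Lemma conjCD (a b : C) : conjC (a + b) = conjC a + conjC b.
Proof. by rewrite /conjC rmorphD. Qed.

Lemma conjCV (a : C) : conjC (a^-1) = (conjC a)^-1.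
Proof. by rewrite /conjC conjc_inv. Qed.

Lemma conjCK (a : C) : conjC (conjC a) = a.
Proof. by rewrite /conjC conjcK. Qed.

Lemma conjC_RtoC (a : R) : conjC (RtoC a) = RtoC a.
Proof. by rewrite /conjC /RtoC conjc_real. Qed.

Lemma RtoC_Re (z : C) : RtoC (complex.Re (z : R[i])) = (z + conjC z) / 2%:R.
Proof. by rewrite /RtoC /conjC ReJ_add. Qed.

Lemma ltC0 (e : C) : 0 < e -> e = RtoC (complex.Re (e : R[i])) /\ 0 < complex.Re (e : R[i]).
Proof.
case: e => a b; rewrite ltcE /= => /andP[/eqP -> h]; split => //.
Qed.

Lemma nbhsC (z : C) (A : set C) :
  nbhs z A <-> exists2 r : R, 0 < r & forall w, nc (z - w) < r -> A w.
Proof.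
rewrite nbhs_ballP; split.
  case=> e e0 sub; have [ee er] := ltC0 e0; exists (complex.Re (e : R[i])) => // w h.
  by apply: sub; rewrite -ball_normE /= normE ee ltC.
case=> r r0 H; exists (RtoC r); first by rewrite -(ltC 0) in r0.
by move=> w; rewrite -ball_normE /= normE ltC; apply: H.
Qed.

Lemma closureC (A : set C) z :
  closure A z <-> forall r : R, 0 < r -> exists w, A w /\ nc (z - w) < r.
Proof.
split.
  move=> h r r0; have : nbhs z (fun w => nc (z - w) < r).
    by apply/nbhsC; exists r.
  by move=> /h [w [Aw hw]]; exists w.
move=> h B /nbhsC [r r0 H]; have [w [Aw hw]] := h r r0.
by exists w; split => //; apply: H.
Qed.

Lemma interiorC (A : set C) z :
  interior A z <-> exists2 r : R, 0 < r & forall w, nc (z - w) < r -> A w.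
Proof. by rewrite /interior /= nbhsC. Qed.

Lemma RtoC_continuous : continuous (@RtoC R).
Proof.
move=> a A /nbhsC [r r0 H]; apply/nbhs_ballP; exists r => // b.
rewrite -ball_normE /= => h; apply: H.
by rewrite /RtoC -rmorphB -/(RtoC _) nc_RtoC.
Qed.

Lemma Re_continuous : continuous (fun z : C => complex.Re (z : R[i])).
Proof.
move=> a A /nbhs_ballP [r r0 H]; apply/nbhsC; exists r => // b h.
apply: H; rewrite -ball_normE /=.
have := nc_Re (a - b); rewrite raddfB /=; lra.
Qed.
End A.

Section B.
Variable R : realType.
Local Notation C := (Cx R).

Lemma nc_seg (u w : C) (a b : R) :
  nc ((u + RtoC a * (w - u)) - (u + RtoC b * (w - u))) = `|a - b| * nc (w - u).
Proof.
have -> : (u + RtoC a * (w - u)) - (u + RtoC b * (w - u)) = RtoC (a - b) * (w - u).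
  by rewrite /RtoC rmorphB /=; ring.
by rewrite ncM nc_RtoC.
Qed.

Lemma seg_boundary (F : set C) u w : closed F -> F u -> ~ F w ->
  exists s : R, [/\ 0 <= s <= 1, F (u + RtoC s * (w - u)) & ~ interior F (u + RtoC s * (w - u))].
Proof.
move=> cF Fu Fw.
pose g s := u + RtoC s * (w - u).
pose S := [set s : R | 0 <= s <= 1 /\ F (g s)].
have g0 : g 0 = u by rewrite /g /RtoC rmorph0 mul0r addr0.
have g1 : g 1 = w by rewrite /g /RtoC rmorph1 mul1r addrC subrK.
have S0 : S 0 by split; [rewrite lexx ler01 | rewrite g0].
have hS : has_sup S by split; [exists 0 | exists 1 => s [/andP[_ ?] _]].
set s0 := sup S.
have s0ge : 0 <= s0 := sup_upper_bound hS S0.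
have s0le : s0 <= 1 by apply: ge_sup; [exists 0 | move=> s [/andP[_ ?] _]].
have dpos : 0 < nc (w - u).
  rewrite lt_neqAle nc_ge0 andbT eq_sym nc_eq0 subr_eq0.
  by apply/eqP => wu; apply: Fw; rewrite wu.
have Fg0 : F (g s0).
  have -> : F = closure F by apply/closure_id.
  apply/closureC => r r0.
  have [s Ss hs] := sup_adherent (divr_gt0 r0 dpos) hS.
  exists (g s); split; first by case: Ss.
  rewrite /g nc_seg.
  have sle : s <= s0 := sup_upper_bound hS Ss.
  rewrite ger0_norm ?subr_ge0 //.
  by rewrite -ltr_pdivlMr // ltrBlDr addrC -ltrBlDr.
exists s0; split => //; first by rewrite s0ge s0le.
move=> /interiorC [r r0 H].
have s0lt1 : s0 < 1.
  rewrite lt_neqAle s0le andbT; apply/eqP => s01; apply: Fw.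
  by rewrite -g1 -s01.
pose t := Num.min (1 - s0) (r / (2 * nc (w - u))).
have t0 : 0 < t by rewrite lt_min subr_gt0 s0lt1 /= divr_gt0 // mulr_gt0.
have t1 : t <= 1 - s0 by rewrite ge_min lexx.
have t2 : t <= r / (2 * nc (w - u)) by rewrite ge_min lexx orbT.
have : S (s0 + t).
  split; first by apply/andP; split; lra.
  apply: H; rewrite /g nc_seg.
  have -> : s0 - (s0 + t) = - t by ring.
  rewrite normrN gtr0_norm //.
  rewrite -ltr_pdivlMr //; apply: (le_lt_trans t2).
  rewrite ltr_pM2l // ltf_pV2 ?posrE ?mulr_gt0 //; lra.
move=> /(sup_upper_bound hS); rewrite -/s0; lra.
Qed.

Lemma nc_seg_ball (p u w : C) (s r : R) : 0 <= s <= 1 ->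
  nc (p - u) < r -> nc (p - w) < r -> nc (p - (u + RtoC s * (w - u))) < r.
Proof.
move=> /andP[s0 s1] hu hw.
have -> : p - (u + RtoC s * (w - u)) = RtoC (1 - s) * (p - u) + RtoC s * (p - w).
  by rewrite /RtoC rmorphB rmorph1 /=; ring.
apply: (le_lt_trans (ncD _ _)); rewrite !ncM !nc_RtoC !ger0_norm ?subr_ge0 //.
set a := nc (p - u) in hu *; set b := nc (p - w) in hw *.
pose c := Num.max a b.
have ca : a <= c by rewrite le_max lexx.
have cb : b <= c by rewrite le_max lexx orbT.
have cr : c < r by rewrite gt_max hu hw.
have h1 : 0 <= (1 - s) * (c - a) by rewrite mulr_ge0 // subr_ge0.
have h2 : 0 <= s * (c - b) by rewrite mulr_ge0 // subr_ge0.
lra.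
Qed.

Definition iC : C := Complex 0 1.

Lemma boundary_perfect (U : set C) p : open U -> boundary (closure U) p ->
  forall r : R, 0 < r -> exists q, [/\ boundary (closure U) q, q != p & nc (p - q) < r].
Proof.
move=> oU [cFp nip] r r0.
have cF : closed (closure U) := @closed_closure _ U.
have Fid : closure (closure U) = closure U by apply/esym/closure_id.
rewrite Fid in cFp.
have UF : forall z, U z -> interior (closure U) z.
  move=> z Uz; apply: (@filterS _ _ _ U); first exact: subset_closure.
  by apply: open_nbhs_nbhs; split.
have Up : ~ U p by move=> /UF.
have r20 : 0 < r / 2 by rewrite divr_gt0.
have [u [Uu hu]] := (closureC U p).1 cFp (r / 2) r20.
have [w [Fw hw]] : exists w, ~ closure U w /\ nc (p - w) < r / 2.
  apply: contrapT => hn; apply: nip; apply/interiorC; exists (r / 2); first exact: r20.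
  move=> z hz; apply: contrapT => nz; apply: hn; exists z; split; [exact: nz | exact: hz].
have Fu : closure U u by exact: subset_closure.
have [rho rho0 Hrho] : exists2 rho : R, 0 < rho & forall z, nc (w - z) < rho -> ~ closure U z.
  have : nbhs w (~` closure U) by apply: open_nbhs_nbhs; split; [exact: closed_openC | exact: Fw].
  by move=> /nbhsC.
have wu : w - u != 0 by rewrite subr_eq0; apply/eqP => e; apply: Fw; rewrite e.
have d0 : 0 < nc (w - u) by rewrite lt_neqAle nc_ge0 andbT eq_sym nc_eq0.
have [m [m0 m1 m2]] : exists m : R, [/\ 0 < m, m <= rho & m <= r / 2 - nc (p - w)].
  exists (Num.min rho (r / 2 - nc (p - w))).
  split; first by rewrite lt_min rho0 subr_gt0 hw.
    by rewrite ge_min lexx.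
  by rewrite ge_min lexx orbT.
have [c [c0 cd]] : exists c : R, 0 < c /\ c * nc (w - u) = m / 2.
  exists (m / 2 / nc (w - u)); split; first by rewrite !divr_gt0.
  have dn0 : nc (w - u) != 0 by rewrite gt_eqF.
  exact: divfK.
pose w2 := w + RtoC c * iC * (w - u).
have ncw2 : nc (w - w2) = m / 2.
  have -> : w - w2 = - (RtoC c * iC * (w - u)) by rewrite /w2; ring.
  rewrite ncN !ncM nc_RtoC (gtr0_norm c0).
  have -> : nc iC = 1.
    rewrite /nc /iC /=.
    rewrite expr0n /= expr1n add0r.
    exact: sqrtr1.
  rewrite mulr1; exact: cd.
have Fw2 : ~ closure U w2.
  apply: Hrho; rewrite ncw2; lra.
have hw2 : nc (p - w2) < r / 2.
  have -> : p - w2 = (p - w) + (w - w2) by ring.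
  apply: (le_lt_trans (ncD _ _)); rewrite ncw2.
  lra.
have [s1 [hs1 F1 I1]] := seg_boundary cF Fu Fw.
have [s2 [hs2 F2 I2]] := seg_boundary cF Fu Fw2.
have b1 : boundary (closure U) (u + RtoC s1 * (w - u)).
  by split; [rewrite Fid; exact: F1 | exact: I1].
have b2 : boundary (closure U) (u + RtoC s2 * (w2 - u)).
  by split; [rewrite Fid; exact: F2 | exact: I2].
have n1 := nc_seg_ball hs1 hu hw.
have n2 := nc_seg_ball hs2 hu hw2.
have rr : r / 2 < r by lra.
case: (eqVneq (u + RtoC s1 * (w - u)) p) => e1; last first.
  by exists (u + RtoC s1 * (w - u)); split; [exact: b1 | exact: e1 | apply: lt_trans rr].
case: (eqVneq (u + RtoC s2 * (w2 - u)) p) => e2; last first.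
  by exists (u + RtoC s2 * (w2 - u)); split; [exact: b2 | exact: e2 | apply: lt_trans rr].
exfalso.
have : RtoC s1 * (w - u) = (RtoC s2 * (1 + RtoC c * iC)) * (w - u).
  apply: (addrI u); rewrite e1 -e2 /w2; ring.
move=> /(mulIf wu) /(congr1 (fun z : C => complex.Im (z : R[i]))) /=.
move=> h.
have s20 : s2 = 0.
  have : s2 * c = 0 by rewrite h; ring.
  by move=> /eqP; rewrite mulf_eq0 (gt_eqF c0) orbF => /eqP.
by apply: Up; rewrite -e2 s20 /RtoC rmorph0 mul0r addr0.
Qed.

Lemma closure2 (A : set C) : closure (closure A) = closure A.
Proof. by apply/esym/closure_id; exact: closed_closure. Qed.

Lemma boundary_conj (U : set C) p : (forall z, U z -> U (conjC z)) ->
  boundary (closure U) p -> boundary (closure U) (conjC p).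
Proof.
move=> sU [h1 h2]; split.
  move: h1; rewrite !closure2 => /closureC h; apply/closureC => r r0; have [w [Uw hw]] := h r r0.
  exists (conjC w); split; first exact: sU.
  by rewrite -conjCB nc_conj.
move=> /interiorC [r r0 H]; apply: h2; apply/interiorC; exists r; first exact: r0.
move=> z hz.
have : closure U (conjC z).
  by apply: H; rewrite -conjCB nc_conj.
move=> /closureC h; apply/closureC => e e0; have [w [Uw hw]] := h e e0.
exists (conjC w); split; first exact: sU.
by rewrite -[z]conjCK -conjCB nc_conj.
Qed.

Lemma boundary_notU (U : set C) p : open U -> boundary (closure U) p -> ~ U p.
Proof.
move=> oU [_ nip] Up; apply: nip.
apply: (@filterS _ _ _ U); first exact: subset_closure.
by apply: open_nbhs_nbhs; split.
Qed.
End B.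

Section C1.
Variable R : realType.
Local Notation C := (Cx R).

Lemma nc1 : nc (1 : C) = 1.
Proof. exact: Normc.normc1. Qed.

Lemma nc_prod (I : Type) (r : seq I) (F : I -> C) :
  nc (\prod_(i <- r) F i) = \prod_(i <- r) nc (F i).
Proof. exact: (big_morph _ (@ncM R) nc1). Qed.

Lemma nc_prod_le n (b : 'I_n -> C) (c : R) :
  (forall i, nc (b i) <= c) -> nc (\prod_i b i) <= c ^+ n.
Proof.
elim: n b => [|n IH] b hb; first by rewrite big_ord0 nc1 expr0.
rewrite big_ord_recr /= ncM exprSr.
have c0 : 0 <= c by apply: le_trans (hb ord0); exact: nc_ge0.
apply: ler_pM; [exact: nc_ge0 | exact: nc_ge0 | | exact: hb].
by apply: IH => i; exact: hb.
Qed.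

Lemma prod_diff n (a b : 'I_n -> C) (c e : R) : 1 <= c ->
  (forall i, nc (a i) <= c) -> (forall i, nc (b i) <= c) ->
  (forall i, nc (a i - b i) <= e) ->
  nc (\prod_i a i - \prod_i b i) <= n%:R * c ^+ n * e.
Proof.
move=> c1; elim: n a b => [|n IH] a b ha hb hab.
  by rewrite !big_ord0 subrr nc0 !mul0r.
rewrite !big_ord_recr /=.
set A := \prod_(i < n) _; set B := \prod_(i < n) _.
set an := a _; set bn := b _.
have -> : A * an - B * bn = (A - B) * an + B * (an - bn) by ring.
have e0 : 0 <= e by apply: le_trans (hab ord0); exact: nc_ge0.
have hAB : nc (A - B) <= n%:R * c ^+ n * e.
  by apply: IH => i; [exact: ha | exact: hb | exact: hab].
have hB : nc B <= c ^+ n by apply: nc_prod_le => i; exact: hb.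
have han : nc an <= c by exact: ha.
have hdn : nc (an - bn) <= e by exact: hab.
apply: (le_trans (ncD _ _)); rewrite !ncM.
have cn1 : 1 <= c ^+ n by rewrite exprn_ege1.
have P0 : 0 <= c ^+ n by lra.
set P := c ^+ n in hAB hB cn1 P0 *.
rewrite exprSr -/P.
have h1 : nc (A - B) * nc an <= n%:R * P * e * c.
  apply: ler_pM => //; exact: nc_ge0.
have h2 : nc B * nc (an - bn) <= P * e.
  apply: ler_pM => //; exact: nc_ge0.
have h3 : P * e <= P * c * e.
  have : 0 <= P * e * (c - 1) by rewrite mulr_ge0 // ?mulr_ge0 // subr_ge0.
  lra.
rewrite -natr1.
have -> : (n%:R + 1) * (P * c) * e = n%:R * P * e * c + P * c * e by ring.
lra.
Qed.
End C1.

Lemma inv_le (R : realType) (a b : R) : 0 < a -> a <= b -> b^-1 <= a^-1.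
Proof.
move=> a0 ab; have b0 : 0 < b by apply: lt_le_trans ab.
by rewrite lef_pV2 ?posrE.
Qed.

Section D.
Variables (R : realType) (N : nat) (Ms : 'I_N -> set R) (Us : 'I_N -> set (Cx R)).
Local Notation C := (Cx R).
Hypothesis oU : forall i, open (Us i).
Hypothesis MU : forall i x, Ms i x -> Us i (RtoC x).
Hypothesis Mcl : forall i, closed (Ms i).
Local Notation K := [set x : 'rV[R]_N | forall i, Ms i (x ord0 i)].
Local Notation Bd i := (boundary (closure (Us i))).
Definition valid (xi : 'I_N -> C) := forall i, Bd i (xi i).

Lemma delta_pt i xi : Bd i xi ->
  exists2 d : R, 0 < d & forall t, Ms i t -> d <= nc (xi - RtoC t).
Proof.
move=> bx.
case: (eqVneq (complex.Im (xi : R[i])) 0) => hIm.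
  have xiE : xi = RtoC (complex.Re (xi : R[i])) by case: xi hIm bx => a b /= ->.
  have nM : ~ Ms i (complex.Re (xi : R[i])).
    move=> h; have := boundary_notU (@oU i) bx; apply; rewrite xiE; exact: MU h.
  have : nbhs (complex.Re (xi : R[i])) (~` Ms i).
    by apply: open_nbhs_nbhs; split; [exact: closed_openC | exact: nM].
  move=> /nbhs_ballP [r r0 H]; exists r; first exact: r0.
  move=> t Mt.
  rewrite [in nc (_ - _)]xiE /RtoC -rmorphB -/(RtoC _) nc_RtoC.
  rewrite leNgt; apply/negP => h.
  have hb : ball (complex.Re (xi : R[i])) r t by rewrite -ball_normE /=; exact: h.
  exact: (H t hb Mt).
exists `|complex.Im (xi : R[i])|; first by rewrite normr_gt0.
move=> t _; have := nc_Im (xi - RtoC t).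
by case: xi {bx hIm} => a b /=; rewrite subr0.
Qed.

Lemma delta_vec xi : valid xi ->
  exists2 d : R, 0 < d & forall i t, Ms i t -> d <= nc (xi i - RtoC t).
Proof.
move=> v.
have : forall i, exists d : R, 0 < d /\ forall t, Ms i t -> d <= nc (xi i - RtoC t).
  by move=> i; have [d d0 h] := delta_pt (v i); exists d.
move=> /choice [f hf].
have S0 : 0 <= \sum_i (f i)^-1.
  by apply: sumr_ge0 => i _; rewrite invr_ge0; apply: ltW; case: (hf i).
exists ((1 + \sum_i (f i)^-1)^-1); first by rewrite invr_gt0; lra.
move=> i t Mt; apply: le_trans (proj2 (hf i) t Mt).
have fi0 : 0 < f i by case: (hf i).
rewrite -[X in _ <= X]invrK; apply: inv_le; first by rewrite invr_gt0.
rewrite (bigD1 i) //=.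
have : 0 <= \sum_(j | j != i) (f j)^-1.
  by apply: sumr_ge0 => j _; rewrite invr_ge0; apply: ltW; case: (hf j).
lra.
Qed.

Lemma kernel_bnd xi : valid xi ->
  exists c : R, 0 <= c /\ forall x, K x -> nc (cauchy_kernel xi x) <= c.
Proof.
move=> v; have [d d0 hd] := delta_vec v.
exists (d^-1 ^+ N); split; first by rewrite exprn_ge0 // invr_ge0 ltW.
move=> x Kx; apply: nc_prod_le => i; rewrite ncV; apply: inv_le => //.
exact: hd.
Qed.

Lemma diff_inv (a b z : C) : a - z != 0 -> b - z != 0 ->
  (a - z)^-1 - (b - z)^-1 = (b - a) * ((a - z)^-1 * (b - z)^-1).
Proof. by move=> h1 h2; field; rewrite h1 h2. Qed.

Lemma kernel_perturb xi : valid xi -> forall e : R, 0 < e ->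
  exists2 r : R, 0 < r & forall eta, (forall i, nc (xi i - eta i) < r) ->
  forall x, K x -> nc (cauchy_kernel xi x - cauchy_kernel eta x) < e.
Proof.
move=> v e e0; have [d d0 hd] := delta_vec v.
have [c [c1 cd]] : exists c : R, 1 <= c /\ 2 / d <= c.
  exists (2 / d + 1); split; last by lra.
  have : 0 <= 2 / d by rewrite divr_ge0 // ltW.
  lra.
have dd0 : 0 < d * d by rewrite mulr_gt0.
pose Q := N%:R * c ^+ N * (2 / (d * d)).
have Q0 : 0 <= Q.
  rewrite /Q; apply: mulr_ge0; first (apply: mulr_ge0; [exact: ler0n | apply: exprn_ge0; lra]).
  by apply: divr_ge0; [lra | exact: ltW].
have [r [r0 r1 r2]] : exists r : R, [/\ 0 < r, r <= d / 2 & r * Q < e].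
  exists (Num.min (d / 2) (e / (Q + 1))); split.
  - by rewrite lt_min divr_gt0 //= divr_gt0 //; lra.
  - by rewrite ge_min lexx.
  - have h1 : Num.min (d / 2) (e / (Q + 1)) <= e / (Q + 1) by rewrite ge_min lexx orbT.
    have h2 : 0 <= Num.min (d / 2) (e / (Q + 1)).
      by rewrite le_min !divr_ge0 // ?ltW //; lra.
    apply: (le_lt_trans (ler_wpM2r Q0 h1)).
    rewrite mulrAC ltr_pdivrMr; last by lra.
    nra.
exists r; first exact: r0.
move=> eta heta x Kx.
apply: le_lt_trans r2.
have -> : r * Q = N%:R * c ^+ N * (r * (2 / (d * d))) by rewrite /Q; ring.
apply: prod_diff => //.
- move=> i; rewrite ncV; apply: (le_trans _ cd).
  apply: (le_trans (inv_le d0 (hd i _ (Kx i)))).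
  rewrite ler_pdivlMr // mulVf ?gt_eqF //; lra.
- move=> i; rewrite ncV.
  have h1 := hd i _ (Kx i).
  have h2 : nc (xi i - RtoC (x ord0 i)) <= nc (xi i - eta i) + nc (eta i - RtoC (x ord0 i)).
    by have := ncD (xi i - eta i) (eta i - RtoC (x ord0 i)); rewrite addrA subrK.
  have h3 := heta i.
  have h4 : d / 2 <= nc (eta i - RtoC (x ord0 i)) by lra.
  apply: (le_trans _ cd); apply: (le_trans (inv_le _ h4)); first by rewrite divr_gt0.
  by rewrite invf_div.
- move=> i.
  have h1 := hd i _ (Kx i).
  have h2 : nc (xi i - RtoC (x ord0 i)) <= nc (xi i - eta i) + nc (eta i - RtoC (x ord0 i)).
    by have := ncD (xi i - eta i) (eta i - RtoC (x ord0 i)); rewrite addrA subrK.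
  have h3 := heta i.
  have h4 : d / 2 <= nc (eta i - RtoC (x ord0 i)) by lra.
  have n1 : xi i - RtoC (x ord0 i) != 0.
    by rewrite -nc_eq0 gt_eqF //; apply: lt_le_trans h1.
  have n2 : eta i - RtoC (x ord0 i) != 0.
    by rewrite -nc_eq0 gt_eqF //; apply: lt_le_trans h4; rewrite divr_gt0.
  rewrite diff_inv // !ncM !ncV ncB.
  have i1 : (nc (xi i - RtoC (x ord0 i)))^-1 <= d^-1 by exact: inv_le.
  have i2 : (nc (eta i - RtoC (x ord0 i)))^-1 <= (d / 2)^-1.
    by apply: inv_le => //; rewrite divr_gt0.
  have -> : r * (2 / (d * d)) = r * (d^-1 * (d / 2)^-1).
    by rewrite invf_div; field; rewrite gt_eqF.
  apply: ler_pM; [exact: nc_ge0 | | exact: ltW | ].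
    by rewrite mulr_ge0 // invr_ge0 nc_ge0.
  by apply: ler_pM => //; rewrite invr_ge0 nc_ge0.
Qed.

Definition term := (C * ('I_N -> C))%type.
Definition ksum (s : seq term) (x : 'rV[R]_N) : C :=
  \sum_(p <- s) p.1 * cauchy_kernel p.2 x.
Definition svalid (s : seq term) := forall p, List.In p s -> valid p.2.
Definition Span (h : 'rV[R]_N -> C) :=
  exists s, svalid s /\ forall x, K x -> h x = ksum s x.

Lemma Span_ext h1 h2 : (forall x, K x -> h1 x = h2 x) -> Span h1 -> Span h2.
Proof.
move=> e [s [vs hs]]; exists s; split => // x Kx; rewrite -e //; exact: hs.
Qed.

Lemma Span0 : Span (fun _ => 0).
Proof. by exists [::]; split => // x _; rewrite /ksum big_nil. Qed.

Lemma SpanD h1 h2 : Span h1 -> Span h2 -> Span (fun x => h1 x + h2 x).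
Proof.
move=> [s1 [v1 e1]] [s2 [v2 e2]]; exists (s1 ++ s2); split.
  by move=> p /List.in_app_iff [] ?; [exact: v1 | exact: v2].
by move=> x Kx; rewrite /ksum big_cat /= -/(ksum s1 x) -/(ksum s2 x) e1 ?e2.
Qed.

Lemma SpanZ a h : Span h -> Span (fun x => a * h x).
Proof.
move=> [s [v e]]; exists (map (fun p : term => (a * p.1, p.2)) s); split.
  move=> p /List.in_map_iff [q [eq Hq]]; rewrite -eq /=; exact: v.
move=> x Kx; rewrite e // /ksum big_map mulr_sumr; apply: eq_bigr => p _ /=.
by rewrite mulrA.
Qed.

Lemma Span_kernel a xi : valid xi -> Span (fun x => a * cauchy_kernel xi x).
Proof.
move=> v; exists [:: (a, xi)]; split.
  by move=> p [<-|[]].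
by move=> x _; rewrite /ksum big_seq1.
Qed.

Lemma Span_sum (I : Type) (r : seq I) (F : I -> 'rV[R]_N -> C) :
  (forall j, Span (F j)) -> Span (fun x => \sum_(j <- r) F j x).
Proof.
move=> hF; elim: r => [|j r IH].
  by apply: Span_ext Span0 => x _; rewrite big_nil.
apply: Span_ext (SpanD (hF j) IH) => x _; by rewrite big_cons.
Qed.

Lemma valid_ne xi x i : valid xi -> K x -> xi i - RtoC (x ord0 i) != 0.
Proof.
move=> v Kx; rewrite subr_eq0; apply/eqP => e.
have := boundary_notU (@oU i) (v i); apply; rewrite e; exact: MU (Kx i).
Qed.

Lemma Span_prod2 xi eta : valid xi -> valid eta -> (forall i, xi i != eta i) ->
  Span (fun x => cauchy_kernel xi x * cauchy_kernel eta x).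
Proof.
move=> vx ve ne.
pose P := \prod_i (eta i - xi i)^-1.
pose sg (f : {ffun 'I_N -> bool}) : C := \prod_i (if f i then 1 else -1).
pose z (f : {ffun 'I_N -> bool}) (i : 'I_N) := if f i then xi i else eta i.
apply: (@Span_ext (fun x => \sum_(f : {ffun 'I_N -> bool}) (P * sg f) * cauchy_kernel (z f) x)).
  move=> x Kx; rewrite /cauchy_kernel -big_split /=.
  have -> : \prod_i ((xi i - RtoC (x ord0 i))^-1 * (eta i - RtoC (x ord0 i))^-1) =
      \prod_i ((eta i - xi i)^-1 * \sum_(b : bool)
          (if b then (xi i - RtoC (x ord0 i))^-1 else - (eta i - RtoC (x ord0 i))^-1)).
    apply: eq_bigr => i _; rewrite big_bool /=.
    rewrite diff_inv ?valid_ne // mulrA mulVf ?mul1r // subr_eq0 eq_sym.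
    exact: ne.
  rewrite big_split /= -/P bigA_distr_bigA /= mulr_sumr; apply: eq_bigr => f _.
  rewrite -mulrA; congr (_ * _).
  rewrite /sg -big_split /=; apply: eq_bigr => i _; rewrite /z.
  by case: (f i); rewrite ?mul1r ?mulN1r.
apply: Span_sum => f; apply: Span_kernel => i; rewrite /z.
by case: (f i); [exact: vx | exact: ve].
Qed.

Definition cgood (g : 'rV[R]_N -> C) :=
  forall e : R, 0 < e -> exists h, Span h /\ forall x, K x -> nc (g x - h x) < e.

Lemma cgood_Span h : Span h -> cgood h.
Proof. by move=> sh e e0; exists h; split => // x _; rewrite subrr nc0. Qed.

Lemma cgood_ext g1 g2 : (forall x, K x -> g1 x = g2 x) -> cgood g1 -> cgood g2.
Proof.
move=> e hg e0 e00; have [h [sh hh]] := hg e0 e00; exists h; split => // x Kx.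
rewrite -e //; exact: hh.
Qed.

Lemma cgoodD g1 g2 : cgood g1 -> cgood g2 -> cgood (fun x => g1 x + g2 x).
Proof.
move=> h1 h2 e e0.
have e20 : 0 < e / 2 by rewrite divr_gt0.
have [k1 [s1 hk1]] := h1 _ e20; have [k2 [s2 hk2]] := h2 _ e20.
exists (fun x => k1 x + k2 x); split; first exact: SpanD.
move=> x Kx.
have -> : g1 x + g2 x - (k1 x + k2 x) = (g1 x - k1 x) + (g2 x - k2 x) by ring.
apply: le_lt_trans (ncD _ _) _.
have := hk1 x Kx; have := hk2 x Kx; lra.
Qed.

Lemma cgoodZ a g : cgood g -> cgood (fun x => a * g x).
Proof.
move=> hg e e0.
have a0 : 0 < nc a + 1 by have := nc_ge0 a; lra.
have [k [sk hk]] := hg (e / (nc a + 1)) (divr_gt0 e0 a0).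
exists (fun x => a * k x); split; first exact: SpanZ.
move=> x Kx; rewrite -mulrBr ncM.
have h1 := hk x Kx; have h2 := nc_ge0 (g x - k x); have h3 := nc_ge0 a.
apply: (le_lt_trans (y := nc a * (e / (nc a + 1)))).
  by apply: ler_wpM2l => //; exact: ltW.
have t0 : 0 < e / (nc a + 1) by rewrite divr_gt0.
have ht : e / (nc a + 1) * (nc a + 1) = e by rewrite divfK // gt_eqF.
lra.
Qed.

Lemma cgood_kk xi eta : valid xi -> valid eta ->
  cgood (fun x => cauchy_kernel xi x * cauchy_kernel eta x).
Proof.
move=> vx ve e e0.
have [c [c0 hc]] := kernel_bnd vx.
have c10 : 0 < c + 1 by lra.
have [r r0 hr] := kernel_perturb ve (divr_gt0 e0 c10).
have : forall i, exists q, [/\ Bd i q, q != xi i & nc (eta i - q) < r].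
  move=> i; case: (eqVneq (eta i) (xi i)) => ex; last first.
    by exists (eta i); split; [exact: ve | exact: ex | rewrite subrr nc0].  
  have [q [bq nq hq]] := boundary_perfect (@oU i) (ve i) r0.
  by exists q; split => //; rewrite -ex.
move=> /choice [eta' heta'].
have ve' : valid eta' by move=> i; case: (heta' i).
exists (fun x => cauchy_kernel xi x * cauchy_kernel eta' x); split.
  apply: Span_prod2 => // i; case: (heta' i) => _ ne _; by rewrite eq_sym.
move=> x Kx; rewrite -mulrBr ncM.
have h1 := hc x Kx.
have h2 := hr eta' (fun i => (let: And3 _ _ h := heta' i in h)) x Kx.
have h3 := nc_ge0 (cauchy_kernel eta x - cauchy_kernel eta' x).
have h4 := nc_ge0 (cauchy_kernel xi x).
have t0 : 0 < e / (c + 1) by rewrite divr_gt0.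
have ht : e / (c + 1) * (c + 1) = e by rewrite divfK // gt_eqF.
apply: (le_lt_trans (y := c * (e / (c + 1)))).
  apply: ler_pM => //; exact: ltW.
lra.
Qed.

Lemma cgood_kS xi s2 : valid xi -> svalid s2 ->
  cgood (fun x => cauchy_kernel xi x * ksum s2 x).
Proof.
move=> vx; elim: s2 => [|q s IH] vs.
  apply: (@cgood_ext (fun _ => 0)); first by move=> x _; rewrite /ksum big_nil mulr0.
  exact: cgood_Span Span0.
have vq : valid q.2 by apply: vs; left.
have vs' : svalid s by move=> p hp; apply: vs; right.
apply: (@cgood_ext (fun x => q.1 * (cauchy_kernel xi x * cauchy_kernel q.2 x) +
                          cauchy_kernel xi x * ksum s x)).
  by move=> x _; rewrite /ksum big_cons; ring.
apply: cgoodD; last exact: IH.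
apply: cgoodZ; exact: cgood_kk.
Qed.

Lemma cgood_SS h1 h2 : Span h1 -> Span h2 -> cgood (fun x => h1 x * h2 x).
Proof.
move=> [s1 [v1 e1]] [s2 [v2 e2]].
apply: (@cgood_ext (fun x => ksum s1 x * ksum s2 x)).
  by move=> x Kx; rewrite e1 ?e2.
elim: s1 v1 {e1} => [|p s IH] vs.
  apply: (@cgood_ext (fun _ => 0)); first by move=> x _; rewrite /ksum big_nil mul0r.
  exact: cgood_Span Span0.
have vp : valid p.2 by apply: vs; left.
have vs' : svalid s by move=> q hq; apply: vs; right.
apply: (@cgood_ext (fun x => p.1 * (cauchy_kernel p.2 x * ksum s2 x) +
                          ksum s x * ksum s2 x)).
  by move=> x _; rewrite /ksum big_cons; ring.
apply: cgoodD; last exact: IH.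
apply: cgoodZ; exact: cgood_kS.
Qed.

Lemma cont_prod (I : Type) (r : seq I) (F : I -> 'rV[R]_N -> C) x :
  (forall i, {for x, continuous (F i)}) ->
  {for x, continuous (fun y => \prod_(i <- r) F i y)}.
Proof.
move=> hF; elim: r => [|i r IH].
  have -> : (fun y => \prod_(i <- [::]) F i y) = (fun _ => 1).
    by apply: funext => y; rewrite big_nil.
  exact: cst_continuous.
have -> : (fun y => \prod_(j <- i :: r) F j y) = (fun y => F i y * \prod_(j <- r) F j y).
  by apply: funext => y; rewrite big_cons.
apply: (@continuousM C _ (F i) (fun y => \prod_(j <- r) F j y) x); [exact: hF | exact: IH].
Qed.

Lemma kernel_cont xi x : valid xi -> K x -> {for x, continuous (cauchy_kernel xi)}.
Proof.
move=> v Kx; apply: cont_prod => i.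
apply: continuousV; first exact: valid_ne.
apply: (@continuousB C C^o _ (fun _ => xi i) (fun y : 'rV[R]_N => RtoC (y ord0 i)) x).
  exact: cst_continuous.
apply: (continuous_comp (f := fun y : 'rV[R]_N => y ord0 i)).
  exact: coord_continuous.
exact: RtoC_continuous.
Qed.

Definition reK (a : C) xi (x : 'rV[R]_N) : R := complex.Re ((a * cauchy_kernel xi x : C) : R[i]).

Lemma reK_cont a xi : valid xi -> {within K, continuous (reK a xi)}.
Proof.
move=> v; apply: continuous_in_subspaceT => x /set_mem Kx.
apply: (continuous_comp (f := fun y => a * cauchy_kernel xi y)); last exact: Re_continuous.
apply: continuousM; first exact: cst_continuous.
exact: kernel_cont.
Qed.
End D.

Section Sqrt.
Variable R : realType.

Fixpoint qs (n : nat) (u : R) : R :=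
  if n is n'.+1 then qs n' u + (u - qs n' u * qs n' u) / 2 else 0.

Lemma bern n (a : R) : 0 <= a <= 1 -> (1 - a) ^+ n * (1 + n%:R * a) <= 1.
Proof.
move=> /andP[a0 a1]; elim: n => [|n IH]; first by rewrite expr0 mul0r addr0 mulr1.
rewrite exprSr -natr1.
have h0 : 0 <= (1 - a) ^+ n by rewrite exprn_ge0 // subr_ge0.
have : (1 - a) * (1 + (n%:R + 1) * a) <= 1 + n%:R * a.
  have : 0 <= (n%:R + 1) * a * a by rewrite !mulr_ge0 // addr_ge0 // ler0n.
  have : 0 <= n%:R * a :> R by rewrite mulr_ge0 // ler0n.
  nra.
move=> h; apply: le_trans IH.
rewrite -mulrA; apply: ler_wpM2l => //.
Qed.

Lemma qs_bound n (v : R) : 0 <= v <= 1 ->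
  0 <= qs n (v * v) <= v /\ v - qs n (v * v) <= v * (1 - v / 2) ^+ n.
Proof.
move=> /andP[v0 v1]; elim: n => [|n [/andP[q0 q1] IH]] /=.
  by rewrite lexx v0 subr0 expr0 mulr1.
set q := qs n (v * v) in q0 q1 IH *.
have hv : 0 <= 1 - v / 2 by lra.
have e : v - (q + (v * v - q * q) / 2) = (v - q) * (1 - (v + q) / 2) by field.
split.
  apply/andP; split.
    have : 0 <= (v - q) * (v + q) by rewrite mulr_ge0 //; lra.
    lra.
  have : (v - q) * (v + q) <= (v - q) * 2.
    apply: ler_wpM2l; lra.
  lra.
rewrite e exprSr mulrA.
apply: ler_pM; lra.
Qed.

Lemma qs_err n (v : R) : 0 <= v <= 1 -> 0 <= v - qs n (v * v) <= 2 / (n%:R + 1).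
Proof.
move=> hv; have [/andP[q0 q1] h] := qs_bound n hv.
apply/andP; split; first lra.
apply: le_trans h _.
case/andP: hv => v0 v1.
have hb := @bern n (v / 2) (ltac:(apply/andP; split; lra)).
have h0 : 0 <= (1 - v / 2) ^+ n by rewrite exprn_ge0 //; lra.
have n0 : 0 <= n%:R :> R by exact: ler0n.
rewrite ler_pdivlMr; last by lra.
have : v * (1 - v / 2) ^+ n * (1 + n%:R * (v / 2)) <= v by nra.
nra.
Qed.
End Sqrt.

Lemma mx_prop (R : realType) (a b : R) :
  a <= (a + b + `|a - b|) / 2 /\ b <= (a + b + `|a - b|) / 2 /\
  ((a + b + `|a - b|) / 2 = a \/ (a + b + `|a - b|) / 2 = b).
Proof.
have [ab|ba] := leP a b.
  have -> : `|a - b| = b - a by rewrite distrC ger0_norm ?subr_ge0.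
  split; [lra|split; [lra|right; by field]].
have -> : `|a - b| = a - b by rewrite gtr0_norm ?subr_gt0.
split; [lra|split; [lra|left; by field]].
Qed.

Lemma mn_prop (R : realType) (a b : R) :
  (a + b - `|a - b|) / 2 <= a /\ (a + b - `|a - b|) / 2 <= b /\
  ((a + b - `|a - b|) / 2 = a \/ (a + b - `|a - b|) / 2 = b).
Proof.
have [ab|ba] := leP a b.
  have -> : `|a - b| = b - a by rewrite distrC ger0_norm ?subr_ge0.
  split; [lra|split; [lra|left; by field]].
have -> : `|a - b| = a - b by rewrite gtr0_norm ?subr_gt0.
split; [lra|split; [lra|right; by field]].
Qed.

Section SW.
Variables (R : realType) (T : ptopologicalType) (K : set T).
Hypothesis cK : compact K.
Variable G : (T -> R) -> Prop.
Hypothesis Gc : forall g, G g -> {within K, continuous g}.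
Hypothesis Gb : forall g, G g -> exists c : R, forall x, K x -> `|g x| <= c.
Hypothesis G0 : G (fun _ => 0).
Hypothesis GD : forall f g, G f -> G g -> G (fun x => f x + g x).
Hypothesis GZ : forall a f, G f -> G (fun x => a * f x).
Hypothesis GM : forall f g, G f -> G g -> G (fun x => f x * g x).
Hypothesis GL : forall g, {within K, continuous g} ->
  (forall e : R, 0 < e -> exists h, G h /\ forall x, K x -> `|g x - h x| < e) -> G g.
Hypothesis Gsep : forall x y, K x -> K y -> x <> y ->
  exists h, [/\ G h, h x <> h y, h x <> 0 & h y <> 0].
Hypothesis Gnz : forall x, K x -> exists h, G h /\ h x <> 0.

Lemma Gq n u : G u -> G (fun x => qs n (u x)).
Proof.
move=> Gu; elim: n => [|n IH] /=; first exact: G0.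
apply: GD => //; have -> : (fun x => (u x - qs n (u x) * qs n (u x)) / 2) =
   (fun x => 2^-1 * (u x + (-1) * (qs n (u x) * qs n (u x)))).
  by apply: funext => x; ring.
apply: GZ; apply: GD => //; apply: GZ; exact: GM.
Qed.

Lemma Gabs g : G g -> G (fun x => `|g x|).
Proof.
move=> Gg; have [c hc] := Gb Gg.
apply: GL.
  move=> x; apply: continuous_comp; first exact: Gc.
  exact: norm_continuous.
move=> e e0.
have [c0 [c00 c0c]] : exists c0 : R, 0 < c0 /\ forall x, K x -> `|g x| <= c0.
  exists (Num.max c 1); split; first by rewrite lt_max ltr01 orbT.
  by move=> x Kx; rewrite le_max hc.
pose u := fun x => (c0^-1 * g x) * (c0^-1 * g x).
have Gu : G u by apply: GM; apply: GZ.
have [n hn] : exists n : nat, c0 * (2 / (n%:R + 1)) < e.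
  exists (Num.Def.archi_bound (2 * c0 / e)).
  have := @archi_boundP _ (2 * c0 / e) (ltac:(apply: divr_ge0; lra)).
  set m := (Num.Def.archi_bound _)%:R => hm.
  have m0 : 0 <= m by rewrite /m ler0n.
  rewrite mulrA ltr_pdivrMr; last by lra.
  by rewrite ltr_pdivrMr in hm; lra.
exists (fun x => c0 * qs n (u x)); split; first by apply: GZ; exact: Gq.
move=> x Kx.
pose v := c0^-1 * `|g x|.
have hv : 0 <= v <= 1.
  apply/andP; split; first by rewrite mulr_ge0 // invr_ge0 ltW.
  by rewrite /v ler_pdivrMl // mulr1; exact: c0c.
have gg : `|g x| * `|g x| = g x * g x by rewrite -normrM ger0_norm // -expr2 sqr_ge0.
have uv : u x = v * v.
  rewrite /u /v; transitivity (c0^-1 * c0^-1 * (g x * g x)); first by ring.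
  by rewrite -gg; ring.
rewrite uv.
have [/andP[h1 h2]] := qs_err n hv.
have -> : `|g x| = c0 * v by rewrite /v mulrA mulfV ?mul1r // gt_eqF.
rewrite -mulrBr normrM gtr0_norm // ger0_norm //.
apply: le_lt_trans hn; apply: ler_wpM2l => //; exact: ltW.
Qed.

Lemma Gmax f g : G f -> G g -> G (fun x => (f x + g x + `|f x - g x|) / 2).
Proof.
move=> Gf Gg; have -> : (fun x => (f x + g x + `|f x - g x|) / 2) =
  (fun x => 2^-1 * (f x + g x + `|f x + (-1) * g x|)).
  by apply: funext => x; rewrite mulN1r mulrC.
apply: GZ; apply: GD; first exact: GD.
by apply: Gabs; apply: GD => //; apply: GZ.
Qed.

Lemma Gmin f g : G f -> G g -> G (fun x => (f x + g x - `|f x - g x|) / 2).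
Proof.
move=> Gf Gg; have -> : (fun x => (f x + g x - `|f x - g x|) / 2) =
  (fun x => 2^-1 * (f x + g x + (-1) * `|f x + (-1) * g x|)).
  by apply: funext => x; rewrite !mulN1r mulrC.
apply: GZ; apply: GD; first exact: GD.
by apply: GZ; apply: Gabs; apply: GD => //; apply: GZ.
Qed.

Lemma Ginterp (f : T -> R) x y : K x -> K y ->
  exists g, [/\ G g, g x = f x & g y = f y].
Proof.
move=> Kx Ky; case: (pselect (x = y)) => [<-|nxy].
  have [h [Gh hx]] := Gnz Kx.
  exists (fun z => (f x / h x) * h z); split => //; first exact: GZ.
    by rewrite mulfVK //; apply/eqP.
  by rewrite mulfVK //; apply/eqP.
have [h [Gh hxy hx0 hy0]] := Gsep Kx Ky nxy.
set a := h x; set b := h y.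
have D0 : a * b * (b - a) != 0.
  rewrite !mulf_neq0 //; [exact/eqP | exact/eqP | rewrite subr_eq0; apply/eqP => e; exact: hxy (esym e)].
pose al := (f x * b * b - f y * a * a) / (a * b * (b - a)).
pose be := (f y * a - f x * b) / (a * b * (b - a)).
exists (fun z => al * h z + be * (h z * h z)); split.
- by apply: GD; apply: GZ => //; exact: GM.
- rewrite -/a /al /be; field.
  move: D0; rewrite !mulf_eq0 !negb_or => /andP[/andP[-> ->] ->] //.
- rewrite -/b /al /be; field.
  move: D0; rewrite !mulf_eq0 !negb_or => /andP[/andP[-> ->] ->] //.
Qed.

Variable f : T -> R.
Hypothesis fc : {within K, continuous f}.

Lemma open_lt (g h : T -> R) : {within K, continuous g} -> {within K, continuous h} ->
  open ([set z | g z < h z] : set (subspace K)).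
Proof.
move=> gc hc.
have -> : ([set z | g z < h z] : set (subspace K)) =
    (fun z : subspace K => h z - g z) @^-1` [set r | 0 < r].
  by apply/seteqP; split => z /=; rewrite subr_gt0.
apply: open_comp; last exact: open_gt.
move=> z _; apply: continuousB; [exact: hc | exact: gc].
Qed.

Lemma cKS : cover_compact (K : set (subspace K)).
Proof.
rewrite -compact_cover.
have := (compact_subspaceIP K K).2; rewrite setIid; apply; exact: cK.
Qed.

Lemma step1 x e : K x -> 0 < e ->
  exists g, [/\ G g, g x = f x & forall z, K z -> g z < f z + e].
Proof.
move=> Kx e0.
have : forall y, exists g, K y -> [/\ G g, g x = f x & g y = f y].
  move=> y; case: (pselect (K y)) => Ky.
    by have [g hg] := Ginterp f Kx Ky; exists g.
  by exists (fun _ => 0).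
move=> /choice [gy hgy].
pose V y := [set z | gy y z < f z + e].
have oV : forall y, K y -> open (V y : set (subspace K)).
  move=> y Ky; apply: open_lt; first by have [Gg _ _] := hgy y Ky; exact: Gc.
  by move=> z; apply: continuousD; [exact: fc | exact: cst_continuous].
have hcov : (K : set (subspace K)) `<=` cover K V.
  move=> z Kz; exists z; first exact: Kz.
  have [_ _ e1] := hgy z Kz; rewrite /V /= e1; lra.
have [D' sub cov] := @cKS T K V oV hcov.
have main : forall s : seq T, (forall y, y \in s -> K y) ->
    exists g, [/\ G g, g x = f x &
      forall z, K z -> (exists2 y, y \in s & V y z) -> g z < f z + e].
  elim => [|y s IH] hs.
    have [Gg gx _] := hgy x Kx.
    by exists (gy x); split => // z _ [y].
  have Ky : K y by apply: hs; rewrite inE eqxx.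
  have [g [Gg gx hg]] := IH (fun y' hy' => hs y' (ltac:(by rewrite inE hy' orbT))).
  have [Gy gyx gyy] := hgy y Ky.
  exists (fun z => (g z + gy y z - `|g z - gy y z|) / 2); split.
  - exact: Gmin.
  - by rewrite gx gyx subrr normr0 subr0; field.
  - move=> z Kz [y' hy' Vz].
    have [m1 [m2 _]] := mn_prop (g z) (gy y z).
    move: hy'; rewrite inE => /orP [/eqP eyy|hy'].
      by apply: (le_lt_trans m2); rewrite -eyy; exact: Vz.
    by apply: (le_lt_trans m1); apply: hg => //; exists y'.
have [g [Gg gx hg]] := main (finmap.enum_fset D') (fun y hy => set_mem (sub y hy)).
exists g; split => // z Kz.
have [y hy Vz] := cov z Kz.
by apply: hg => //; exists y.
Qed.

Lemma SWthm e : 0 < e -> exists g, G g /\ forall x, K x -> `|f x - g x| < e.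
Proof.
move=> e0.
have : forall x, exists g, K x -> [/\ G g, g x = f x & forall z, K z -> g z < f z + e].
  move=> x; case: (pselect (K x)) => Kx.
    by have [g hg] := step1 Kx e0; exists g.
  by exists (fun _ => 0).
move=> /choice [hx hhx].
pose W y := [set z | f z - e < hx y z].
have oW : forall y, K y -> open (W y : set (subspace K)).
  move=> y Ky; apply: open_lt; last by have [Gg _ _] := hhx y Ky; exact: Gc.
  by move=> z; apply: continuousB; [exact: fc | exact: cst_continuous].
have hcov : (K : set (subspace K)) `<=` cover K W.
  move=> z Kz; exists z; first exact: Kz.
  have [_ e1 _] := hhx z Kz; rewrite /W /= e1; lra.
have [D' sub cov] := @cKS T K W oW hcov.
have main : forall s : seq T, (forall y, y \in s -> K y) ->
    exists g, [/\ G g, forall z, K z -> g z < f z + e &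
      forall z, K z -> (exists2 y, y \in s & W y z) -> f z - e < g z].
  elim => [|y s IH] hs.
    case: (pselect (exists x0, K x0)) => [[x0 Kx0]|nK].
      have [Gg _ hg] := hhx x0 Kx0.
      by exists (hx x0); split => // z _ [y].
    exists (fun _ => 0); split => //.
      by move=> z Kz; exfalso; apply: nK; exists z.
    by move=> z _ [y].
  have Ky : K y by apply: hs; rewrite inE eqxx.
  have [g [Gg gl hg]] := IH (fun y' hy' => hs y' (ltac:(by rewrite inE hy' orbT))).
  have [Gy gyx gyl] := hhx y Ky.
  exists (fun z => (g z + hx y z + `|g z - hx y z|) / 2); split.
  - exact: Gmax.
  - move=> z Kz; have [_ [_ [->|->]]] := mx_prop (g z) (hx y z).
      exact: gl.
    exact: gyl.
  - move=> z Kz [y' hy' Wz].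
    have [m1 [m2 _]] := mx_prop (g z) (hx y z).
    move: hy'; rewrite inE => /orP [/eqP eyy|hy'].
      by apply: (lt_le_trans _ m2); rewrite -eyy; exact: Wz.
    by apply: (lt_le_trans _ m1); apply: hg => //; exists y'.
have [g [Gg gl hg]] := main (finmap.enum_fset D') (fun y hy => set_mem (sub y hy)).
exists g; split => // z Kz.
have [y hy Wz] := cov z Kz.
have h1 := gl z Kz.
have h2 : f z - e < g z by apply: hg => //; exists y.
rewrite ltr_norml; apply/andP; split; lra.
Qed.
End SW.

Section E0.
Variable R : realType.
Local Notation C := (Cx R).
Lemma RtoCD (a b : R) : RtoC (a + b) = RtoC a + RtoC b :> C.
Proof. by rewrite /RtoC rmorphD. Qed.
Lemma RtoCB (a b : R) : RtoC (a - b) = RtoC a - RtoC b :> C.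
Proof. by rewrite /RtoC rmorphB. Qed.
Lemma RtoCM (a b : R) : RtoC (a * b) = RtoC a * RtoC b :> C.
Proof. by rewrite /RtoC rmorphM. Qed.
Lemma RtoC0 : RtoC 0 = 0 :> C.
Proof. by rewrite /RtoC rmorph0. Qed.
Lemma conjC1 : conjC (1 : C) = 1.
Proof. by rewrite /conjC conjc1. Qed.

Lemma conj_kernel N (xi : 'I_N -> C) (x : 'rV[R]_N) :
  conjC (cauchy_kernel xi x) = cauchy_kernel (fun i => conjC (xi i)) x.
Proof.
rewrite /cauchy_kernel (big_morph _ (@conjCM R) conjC1); apply: eq_bigr => i _.
by rewrite conjCV conjCB conjC_RtoC.
Qed.

Lemma Re_lin (a u w : C) :
  complex.Re ((a * (u - w) : C) : R[i]) = complex.Re ((a * u : C) : R[i]) - complex.Re ((a * w : C) : R[i]).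
Proof. by case: a => a1 a2; case: u => u1 u2; case: w => w1 w2 /=; ring. Qed.

Lemma re_ne (z : C) (t : R) : z != 0 ->
  `|complex.Im (z : R[i]) / complex.Re (z : R[i])| < t ->
  complex.Re ((Complex t 1 * z : C) : R[i]) != 0.
Proof.
case: z => p q /= nz ht.
have -> : t * p - 1 * q = t * p - q by ring.
case: (eqVneq p 0) => [p0|p0].
  rewrite p0 mulr0 sub0r oppr_eq0; apply: contra nz => /eqP q0.
  by rewrite p0 q0.
apply/eqP => e; have tE : t = q / p.
  by apply: (mulIf p0); rewrite divfK //; apply/eqP; rewrite -subr_eq0; apply/eqP.
by move: ht; rewrite -tE => /(le_lt_trans (ler_norm _)); rewrite ltxx.
Qed.

Lemma choose_a (z1 z2 z3 : C) : z1 != 0 -> z2 != 0 -> z3 != 0 ->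
  exists a : C, [/\ complex.Re ((a * z1 : C) : R[i]) != 0,
    complex.Re ((a * z2 : C) : R[i]) != 0 & complex.Re ((a * z3 : C) : R[i]) != 0].
Proof.
move=> n1 n2 n3.
pose r (z : C) := `|complex.Im (z : R[i]) / complex.Re (z : R[i])|.
pose t := 1 + r z1 + r z2 + r z3.
have h1 := normr_ge0 (complex.Im (z1 : R[i]) / complex.Re (z1 : R[i])).
have h2 := normr_ge0 (complex.Im (z2 : R[i]) / complex.Re (z2 : R[i])).
have h3 := normr_ge0 (complex.Im (z3 : R[i]) / complex.Re (z3 : R[i])).
exists (Complex t 1); split; apply: re_ne => //; rewrite /t /r; lra.
Qed.
End E0.

Section E.
Variables (R : realType) (N : nat) (Ms : 'I_N -> set R) (Us : 'I_N -> set (Cx R)).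
Local Notation C := (Cx R).
Hypothesis oU : forall i, open (Us i).
Hypothesis MU : forall i x, Ms i x -> Us i (RtoC x).
Hypothesis Mcl : forall i, closed (Ms i).
Hypothesis sU : forall i z, Us i z -> Us i (conjC z).
Local Notation K := [set x : 'rV[R]_N | forall i, Ms i (x ord0 i)].
Local Notation Bd i := (boundary (closure (Us i))).
Local Notation Span := (Span Ms Us).
Local Notation cgood := (cgood Ms Us).
Local Notation valid := (valid Us).

Lemma cgoodM_bnd (g1 g2 : 'rV[R]_N -> C) c1 c2 :
  (forall x, K x -> nc (g1 x) <= c1) -> (forall x, K x -> nc (g2 x) <= c2) ->
  cgood g1 -> cgood g2 -> cgood (fun x => g1 x * g2 x).
Proof.
move=> b1 b2 h1 h2 e e0.
pose c := `|c1| + `|c2| + 1.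
have c0 : 0 < c by rewrite /c; have := normr_ge0 c1; have := normr_ge0 c2; lra.
have [e1 [e10 e11 e12]] : exists e1 : R, [/\ 0 < e1, e1 <= 1 & c * e1 <= e / 2].
  exists (Num.min 1 (e / 2 / c)); split.
  - by rewrite lt_min ltr01 /= !divr_gt0.
  - by rewrite ge_min lexx.
  - have h : Num.min 1 (e / 2 / c) <= e / 2 / c by rewrite ge_min lexx orbT.
    apply: le_trans (ler_wpM2l (ltW c0) h) _.
    by rewrite mulrC divfK // gt_eqF.
have [k1 [s1 hk1]] := h1 _ e10.
have [k2 [s2 hk2]] := h2 _ e10.
have e20 : 0 < e / 2 by rewrite divr_gt0.
have [k [sk hk]] := cgood_SS oU MU Mcl s1 s2 e20.
exists k; split => // x Kx.
have -> : g1 x * g2 x - k x =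
   g1 x * (g2 x - k2 x) + k2 x * (g1 x - k1 x) + (k1 x * k2 x - k x) by ring.
have t1 := ncD (g1 x * (g2 x - k2 x) + k2 x * (g1 x - k1 x)) (k1 x * k2 x - k x).
have t2 := ncD (g1 x * (g2 x - k2 x)) (k2 x * (g1 x - k1 x)).
rewrite !ncM in t2.
have q1 := hk1 x Kx; have q2 := hk2 x Kx; have q3 := hk x Kx.
have nk2 : nc (k2 x) <= `|c2| + 1.
  have := ncD (g2 x) (k2 x - g2 x); rewrite addrC subrK ncB.
  have := b2 x Kx; have := ler_norm c2; lra.
have p1 : nc (g1 x) * nc (g2 x - k2 x) <= `|c1| * e1.
  apply: ler_pM; [exact: nc_ge0 | exact: nc_ge0 | | exact: ltW].
  by apply: le_trans (b1 x Kx) (ler_norm c1).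
have p2 : nc (k2 x) * nc (g1 x - k1 x) <= (`|c2| + 1) * e1.
  apply: ler_pM; [exact: nc_ge0 | exact: nc_ge0 | exact: nk2 | exact: ltW].
have : `|c1| * e1 + (`|c2| + 1) * e1 = c * e1 by rewrite /c; ring.
lra.
Qed.

Definition good (g : 'rV[R]_N -> R) :=
  [/\ {within K, continuous g}, exists c : R, forall x, K x -> `|g x| <= c &
      cgood (fun x => RtoC (g x))].

Lemma good0 : good (fun _ => 0).
Proof.
split; first by move=> x; exact: cst_continuous.
  by exists 0 => x _; rewrite normr0.
apply: (@cgood_ext _ _ _ _ (fun _ => 0)); first by move=> x _; rewrite RtoC0.
apply: cgood_Span; exact: Span0.
Qed.

Lemma goodD f g : good f -> good g -> good (fun x => f x + g x).
Proof.
move=> [cf [c1 b1] af] [cg [c2 b2] ag]; split.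
- exact: (within_continuousD cf cg).
- exists (c1 + c2) => x Kx; apply: le_trans (ler_normD _ _) _.
  by apply: lerD; [exact: b1 | exact: b2].
- apply: (@cgood_ext _ _ _ _ (fun x => RtoC (f x) + RtoC (g x))).
    by move=> x _; rewrite RtoCD.
  exact: cgoodD.
Qed.

Lemma goodZ a f : good f -> good (fun x => a * f x).
Proof.
move=> [cf [c1 b1] af]; split.
- move=> x; exact: (@continuousM R (subspace K) (fun _ => a) f x (@cst_continuous _ _ a x) (cf x)).
- exists (`|a| * c1) => x Kx; rewrite normrM; apply: ler_wpM2l => //; exact: b1.
- apply: (@cgood_ext _ _ _ _ (fun x => RtoC a * RtoC (f x))).
    by move=> x _; rewrite RtoCM.
  exact: cgoodZ.
Qed.

Lemma goodM f g : good f -> good g -> good (fun x => f x * g x).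
Proof.
move=> [cf [c1 b1] af] [cg [c2 b2] ag]; split.
- move=> x; exact: (@continuousM R (subspace K) f g x (cf x) (cg x)).
- exists (`|c1| * `|c2|) => x Kx; rewrite normrM.
  apply: ler_pM => //; apply: le_trans (ler_norm _); [exact: b1 | exact: b2].
- apply: (@cgood_ext _ _ _ _ (fun x => RtoC (f x) * RtoC (g x))).
    by move=> x _; rewrite RtoCM.
  apply: (cgoodM_bnd (c1 := c1) (c2 := c2)) => // x Kx; rewrite nc_RtoC.
    exact: b1.
  exact: b2.
Qed.

Lemma goodL g : {within K, continuous g} ->
  (forall e : R, 0 < e -> exists h, good h /\ forall x, K x -> `|g x - h x| < e) ->
  good g.
Proof.
move=> cg H; split => //.
  have [h [[_ [c hc] _] hh]] := H 1 ltr01.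
  exists (c + 1) => x Kx; have := hh x Kx; have := hc x Kx.
  have := ler_normD (g x - h x) (h x); rewrite subrK; lra.
move=> e e0; have e20 : 0 < e / 2 by rewrite divr_gt0.
have [h [[_ _ ah] hh]] := H _ e20.
have [k [sk hk]] := ah _ e20.
exists k; split => // x Kx.
have -> : RtoC (g x) - k x = RtoC (g x - h x) + (RtoC (h x) - k x).
  by rewrite RtoCB; ring.
apply: le_lt_trans (ncD _ _) _; rewrite nc_RtoC.
have := hh x Kx; have := hk x Kx; lra.
Qed.

Hypothesis Bne : forall i, Bd i !=set0.

Lemma kernel_neq0 xi x : valid xi -> K x -> cauchy_kernel xi x != 0.
Proof.
move=> v Kx; apply/prodf_neq0 => i _; rewrite invr_eq0.
exact: (valid_ne oU MU).
Qed.

Lemma good_reK a xi : valid xi -> good (reK a xi).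
Proof.
move=> v; split; first exact: (reK_cont oU MU).
  have [c [c0 hc]] := kernel_bnd oU MU Mcl v.
  exists (nc a * c) => x Kx; apply: le_trans (nc_Re _) _; rewrite ncM.
  apply: ler_wpM2l; [exact: nc_ge0 | exact: hc].
have vc : valid (fun i => conjC (xi i)).
  move=> i; apply: boundary_conj (v i); exact: (fun z => @sU i z).
apply: (@cgood_ext _ _ _ _ (fun x => 2^-1 * a * cauchy_kernel xi x +
   2^-1 * conjC a * cauchy_kernel (fun i => conjC (xi i)) x)).
  move=> x Kx; rewrite /reK RtoC_Re conjCM conj_kernel; ring.
apply: cgood_Span; apply: SpanD; exact: Span_kernel.
Qed.

Lemma cross (a b P Q : C) : a != 0 -> b != 0 -> a^-1 * P = b^-1 * Q -> P * b = Q * a.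
Proof.
move=> ha hb e.
have -> : P * b = (a^-1 * P) * a * b by field.
by rewrite e; field.
Qed.

Lemma sep_kernel x y : K x -> K y -> x <> y ->
  exists xi, valid xi /\ cauchy_kernel xi x != cauchy_kernel xi y.
Proof.
move=> Kx Ky nxy.
have [p pv] : exists p : 'I_N -> C, valid p.
  have /choice [p hp] : forall i, exists q, Bd i q by move=> i; exact: Bne.
  by exists p.
have [j nj] : exists j, x ord0 j != y ord0 j.
  apply: contrapT => H; apply: nxy; apply/rowP => j.
  by apply/eqP; apply: contrapT => h; apply: H; exists j; apply/negP.
have [q2 [b2 n2 _]] := boundary_perfect (@oU j) (pv j) ltr01.
pose xiq q := fun i => if i == j then q else p i.
have vq : forall q, Bd j q -> valid (xiq q).
  move=> q bq i; rewrite /xiq; case: (eqVneq i j) => [->|_]; [exact: bq | exact: pv].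
pose P (z : 'rV[R]_N) := \prod_(i | i != j) (p i - RtoC (z ord0 i))^-1.
have kE : forall q z, cauchy_kernel (xiq q) z = (q - RtoC (z ord0 j))^-1 * P z.
  move=> q z; rewrite /cauchy_kernel (bigD1 j) //= /xiq eqxx; congr (_ * _).
  by apply: eq_bigr => i /negbTE ->.
have nP : forall z, K z -> P z != 0.
  move=> z Kz; apply/prodf_neq0 => i _; rewrite invr_eq0; exact: (valid_ne oU MU).
have nq : forall q z, Bd j q -> K z -> q - RtoC (z ord0 j) != 0.
  move=> q z bq Kz; have := valid_ne oU MU j (vq q bq) Kz; by rewrite /xiq eqxx.
case: (eqVneq (cauchy_kernel (xiq (p j)) x) (cauchy_kernel (xiq (p j)) y)) => e1; last first.
  exists (xiq (p j)); split; [exact: (vq _ (pv j)) | exact: e1].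
case: (eqVneq (cauchy_kernel (xiq q2) x) (cauchy_kernel (xiq q2) y)) => e2; last first.
  exists (xiq q2); split; [exact: (vq _ b2) | exact: e2].
exfalso.
rewrite !kE in e1 e2.
have c1 := cross (nq _ _ (pv j) Kx) (nq _ _ (pv j) Ky) e1.
have c2 := cross (nq _ _ b2 Kx) (nq _ _ b2 Ky) e2.
set a := RtoC (x ord0 j) in c1 c2; set b := RtoC (y ord0 j) in c1 c2.
have : (P x - P y) * (q2 - p j) = 0.
  have -> : (P x - P y) * (q2 - p j) =
    (P x * (q2 - b) - P y * (q2 - a)) - (P x * (p j - b) - P y * (p j - a)) by ring.
  by rewrite c1 c2 !subrr.
move=> /eqP; rewrite mulf_eq0 => /orP [|]; last by rewrite subr_eq0 (negbTE n2).
rewrite subr_eq0 => /eqP ePP.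
have : P x * (a - b) = 0.
  have -> : P x * (a - b) = P x * (p j - b) - P y * (p j - a) by rewrite ePP; ring.
  by rewrite c1 subrr.
move=> /eqP; rewrite mulf_eq0 (negbTE (nP x Kx)) /= subr_eq0 => /eqP eab.
by move: nj; rewrite (RtoC_inj eab) eqxx.
Qed.

Lemma Gsep x y : K x -> K y -> x <> y ->
  exists h, [/\ good h, h x <> h y, h x <> 0 & h y <> 0].
Proof.
move=> Kx Ky nxy; have [xi [v ne]] := sep_kernel Kx Ky nxy.
have n3 : cauchy_kernel xi x - cauchy_kernel xi y != 0 by rewrite subr_eq0.
have [a [a1 a2 a3]] := choose_a (kernel_neq0 v Kx) (kernel_neq0 v Ky) n3.
exists (reK a xi); split.
- exact: good_reK.
- move=> e; move: a3; rewrite Re_lin; rewrite /reK in e; rewrite e subrr eqxx //.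
- by move=> e; move: a1; rewrite /reK in e; rewrite e eqxx.
- by move=> e; move: a2; rewrite /reK in e; rewrite e eqxx.
Qed.

Lemma Gnz x : K x -> exists h, good h /\ h x <> 0.
Proof.
move=> Kx.
have [p pv] : exists p : 'I_N -> C, valid p.
  have /choice [p hp] : forall i, exists q, Bd i q by move=> i; exact: Bne.
  by exists p.
have n0 := kernel_neq0 pv Kx.
have [a [a1 _ _]] := choose_a n0 n0 n0.
exists (reK a p); split; first exact: good_reK.
by move=> e; move: a1; rewrite /reK in e; rewrite e eqxx.
Qed.
End E.

Section F.
Variables (R : realType) (N : nat) (Ms : 'I_N -> set R) (Us : 'I_N -> set (Cx R)).
Local Notation C := (Cx R).
Hypothesis oU : forall i, open (Us i).
Hypothesis MU : forall i x, Ms i x -> Us i (RtoC x).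
Hypothesis Mcl : forall i, closed (Ms i).
Hypothesis sU : forall i z, Us i z -> Us i (conjC z).
Hypothesis Bne : forall i, boundary (closure (Us i)) !=set0.
Local Notation K := [set x : 'rV[R]_N | forall i, Ms i (x ord0 i)].
Hypothesis cK : compact K.

Lemma approx f : {within K, continuous f} -> forall e : R, 0 < e ->
  exists s, svalid Us s /\ forall x, K x -> nc (RtoC (f x) - ksum s x) < e.
Proof.
move=> fc e e0.
have e20 : 0 < e / 2 by rewrite divr_gt0.
have [g [[_ _ ag] hg]] := @SWthm R _ K cK (good Ms Us)
  (fun g (h : good Ms Us g) => let: And3 a _ _ := h in a)
  (fun g (h : good Ms Us g) => let: And3 _ b _ := h in b)
  (good0 Ms Us)
  (@goodD _ _ Ms Us) (@goodZ _ _ Ms Us) (goodM oU MU Mcl) (@goodL _ _ Ms Us)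
  (Gsep oU MU Mcl sU Bne) (Gnz oU MU Mcl sU Bne) f fc _ e20.
have [h [[s [vs hs]] hh]] := ag _ e20.
exists s; split => // x Kx; rewrite -hs //.
have -> : RtoC (f x) - h x = RtoC (f x - g x) + (RtoC (g x) - h x).
  by rewrite RtoCB; ring.
apply: le_lt_trans (ncD _ _) _; rewrite nc_RtoC.
have := hg x Kx; have := hh x Kx; lra.
Qed.
End F.

Lemma In_nth {T : Type} (x0 : T) (s : seq T) k : (k < size s)%N -> List.In (nth x0 s k) s.
Proof.
elim: s k => [|a s IH] [|k] //= h; first by left.
by right; apply: IH.
Qed.

Unset Implicit Arguments. Set Strict Implicit. Set Printing Implicit Defensive.

Theorem theorem2 (R : realType) (N : nat) (Ms : 'I_N -> set R)
    (Us : 'I_N -> set (Cx R)) :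
  (0 < N)%N ->
  compact [set x : 'rV[R]_N | forall i, Ms i (x ord0 i)] ->
  (forall i, open (Us i)) ->
  (forall i, Us i !=set0) ->
  (forall i, connected (Us i)) ->
  (forall i z, Us i z -> Us i (conjC z)) ->
  (forall i x, Ms i x -> Us i (RtoC x)) ->
  (forall i, boundary (closure (Us i)) !=set0) ->
  forall f : 'rV[R]_N -> R,
  {within [set x : 'rV[R]_N | forall i, Ms i (x ord0 i)], continuous f} ->
  forall eps : R, 0 < eps ->
  exists m : nat, exists theta : 'I_m -> Cx R,
  exists xi : 'I_m -> 'I_N -> Cx R,
    [/\ (0 < m)%N,
        (forall k i, boundary (closure (Us i)) (xi k i)) &
        (forall x : 'rV[R]_N, (forall i, Ms i (x ord0 i)) ->
           `| RtoC (f x) - \sum_(k < m) theta k * cauchy_kernel (xi k) x |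
             < RtoC eps)].
Proof.
move=> hN cK oU Une Ucon sU MU Bne f fc eps eps0.
have [p pv] : exists p : 'I_N -> Cx R, valid Us p.
  have /choice [p hp] : forall i, exists q, boundary (closure (Us i)) q.
    by move=> i; exact: Bne.
  by exists p.
case: (pselect (exists x0 : 'rV[R]_N, forall i, Ms i (x0 ord0 i))) => [[x0 Kx0]|nK]; last first.
  exists 1%N, (fun _ : 'I_1 => (0 : Cx R)), (fun _ : 'I_1 => p); split.
  - by [].
  - move=> k i; exact: pv.
  - by move=> x Kx; exfalso; apply: nK; exists x.
have Mcl : forall i, closed (Ms i).
  move=> i.
  have -> : Ms i = (fun x : 'rV[R]_N => x ord0 i) @` [set x : 'rV[R]_N | forall i, Ms i (x ord0 i)].
    apply/seteqP; split.
    - move=> t Mt; exists (\row_j (if j == i then t else x0 ord0 j)).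
        move=> j; rewrite mxE; case: (eqVneq j i) => [->|_]; [exact: Mt | exact: Kx0 j].
      by rewrite mxE eqxx.
    - by move=> t [x Kx <-]; exact: Kx i.
  apply: compact_closed; first exact: Rhausdorff.
  apply: continuous_compact => //; apply: continuous_subspaceT => x.
  exact: coord_continuous.
have [s [vs hs]] := approx oU MU Mcl sU Bne cK fc eps0.
pose s' := ((0 : Cx R), p) :: s.
have vs' : svalid Us s'.
  by move=> q [<-|hq]; [exact: pv | exact: vs].
exists (size s'), (fun k => (nth (0, p) s' k).1), (fun k => (nth (0, p) s' k).2); split.
- by [].
- move=> k i; exact: (vs' _ (@In_nth _ ((0 : Cx R), p) s' k (ltn_ord k)) i).
- move=> x Kx; rewrite normE ltC.
  have -> : \sum_(k < size s') (nth (0, p) s' k).1 * cauchy_kernel (nth (0, p) s' k).2 x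
      = ksum s x.
    have -> : ksum s x = ksum s' x by rewrite /ksum big_cons /= mul0r add0r.
    by rewrite /ksum (big_nth (0, p)) big_mkord.
  exact: hs x Kx.
Qed.
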